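(* Let $\rho_{Q^n}$ be an arbitrary normalized state on $Q^{\otimes n}$. Let $\{P,I-P\}$ and $\{P',I-P'\}$ be two-outcome POVMs on $Q$ with $P\le P'$. Let $\boldsymbol N_P$ (resp. $\boldsymbol N_{P'}$) be the number of $P$-outcomes (resp. $P'$-outcomes) when each subsystem of $\rho_{Q^n}$ is measured with $\{P,I-P\}$ (resp. $\{P',I-P'\}$). Then for every $e$, $$\Pr\Big(\frac{\boldsymbol N_P}{n}\ge e\Big)\le\Pr\Big(\frac{\boldsymbol N_{P'}}{n}\ge e\Big).$$ *)

(* Defs.v *)
From mathcomp Require Import all_boot all_order all_algebra.
Set Implicit Arguments. Unset Strict Implicit. Unset Printing Implicit Defensive.
Import Order.TTheory GRing.Theory Num.Theory.
Local Open Scope ring_scope.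

Section Quantum.
Variable C : numClosedFieldType.

(* Operators on the Hilbert space C^T (T a finite basis) as kernels T -> T -> C *)
Definition op (T : finType) := T -> T -> C.

Definition psd (T : finType) (A : op T) : Prop :=
  (forall i j, A j i = (A i j)^*) /\
  (forall v : T -> C, 0 <= \sum_i \sum_j (v i)^* * A i j * v j).

Definition idop (T : finType) : op T := fun i j => (i == j)%:R.
Definition subop (T : finType) (A B : op T) : op T := fun i j => A i j - B i j.

Definition is_state (T : finType) (rho : op T) : Prop :=
  psd rho /\ \sum_i rho i i = 1.

Definition two_outcome_povm (T : finType) (P : op T) : Prop :=
  psd P /\ psd (subop (@idop T) P).

Definition loewner_le (T : finType) (P P' : op T) : Prop := psd (subop P' P).

(* basis of Q^{\otimes n}, with Q = C^d *)
Definition tens_idx (d n : nat) := {ffun 'I_n -> 'I_d}.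

Definition tensor (d n : nat) (M : 'I_n -> op 'I_d) : op (tens_idx d n) :=
  fun x y => \prod_(k < n) M k (x k) (y k).

Definition trace_mul (T : finType) (A B : op T) : C :=
  \sum_x \sum_y A x y * B y x.

(* measure each subsystem with {P, I - P}; outcome string b (true = P-outcome) *)
Definition outcome_prob (d n : nat) (rho : op (tens_idx d n)) (P : op 'I_d)
  (b : {ffun 'I_n -> bool}) : C :=
  trace_mul rho (tensor (fun k => if b k then P else subop (@idop ('I_d : finType)) P)).

Definition num_P (n : nat) (b : {ffun 'I_n -> bool}) : nat := #|[set k | b k]|.

Definition prob_frac_ge (d n : nat) (rho : op (tens_idx d n)) (P : op 'I_d)
  (e : C) : C :=
  \sum_(b : {ffun 'I_n -> bool} | e <= (num_P b)%:R / n%:R) outcome_prob rho P b.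

End Quantum.

(* Main.v *)
Require Import Defs.
From mathcomp Require Import all_boot all_order all_algebra ring.
Set Implicit Arguments. Unset Strict Implicit. Unset Printing Implicit Defensive.
Import Order.TTheory GRing.Theory Num.Theory.
Local Open Scope ring_scope.

Module SpecDec.
Local Open Scope sesquilinear_scope.
Section Dec.
Variable C : numClosedFieldType.
Variable d : nat.
Variable A : op C 'I_d.
Definition Am : 'M[C]_d := \matrix_(i, j) A i j.
Definition Pm := spectralmx Am.
Definition Dv := spectral_diag Am.

Lemma Am_herm : psd A -> Am \is hermsymmx.
Proof.
case=> hA _; apply/is_hermitianmxP; rewrite expr0 scale1r.
by apply/matrixP=> i j; rewrite !mxE hA.
Qed.

Lemma Am_dec : psd A -> Am = Pm^t* *m diag_mx Dv *m Pm.
Proof.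
move=> /Am_herm /hermitian_normalmx /orthomx_spectralP ->.
by rewrite /Pm invmx_unitary ?spectral_unitarymx.
Qed.

Lemma dec_eq : psd A -> forall x y, A x y = \sum_i Dv 0 i * (Pm i x)^* * Pm i y.
Proof.
move=> /Am_dec E x y.
move/matrixP: E => /(_ x y); rewrite !mxE => ->.
apply: eq_bigr => i _; rewrite !mxE.
rewrite (bigD1 i) //= big1 ?addr0; last first.
  by move=> k /negbTE ki; rewrite !mxE ?ki ?(eq_sym i) ?ki mulr0n ?mulr0 ?mul0r.
by rewrite !mxE eqxx mulr1n (mulrC (_^*)).
Qed.

Lemma dec_ge0 : psd A -> forall i, 0 <= Dv 0 i.
Proof.
move=> hA i; have E := Am_dec hA.
have U := spectral_unitarymx Am.
have : Pm *m Am *m Pm^t* = diag_mx Dv.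
  rewrite E !mulmxA. rewrite (unitarymxP U) mul1mx -mulmxA (unitarymxP U) mulmx1 //.
move=> /matrixP/(_ i i); rewrite [RHS]mxE eqxx mulr1n => <-.
case: hA => _ /(_ (fun y => (Pm i y)^*)).
suff -> : (Pm *m Am *m Pm ^t*) i i = \sum_k \sum_j (Pm i k)^*^* * A k j * (Pm i j)^* by [].
rewrite mxE exchange_big; apply: eq_bigr => j _; rewrite !mxE big_distrl.
by apply: eq_bigr => k _; rewrite !mxE conjCK.
Qed.
End Dec.
End SpecDec.
Import SpecDec.
Lemma tr_tensor_ge0 (C : numClosedFieldType) (d n : nat)
  (rho : op C (tens_idx d n)) (A : 'I_n -> op C 'I_d) :
  psd rho -> (forall k, psd (A k)) -> 0 <= trace_mul rho (tensor A).
Proof.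
move=> hr hA.
pose c k i := Dv (A k) 0 i.
pose Q k i x := Pm (A k) i x.
pose v (f : {ffun 'I_n -> 'I_d}) (x : tens_idx d n) := \prod_k (Q k (f k) (x k))^*.
have Et : forall x y, tensor A x y =
   \sum_(f : {ffun 'I_n -> 'I_d}) \prod_k (c k (f k) * (Q k (f k) (x k))^* * Q k (f k) (y k)).
  move=> x y; rewrite /tensor.
  rewrite (eq_bigr (fun k => \sum_i c k i * (Q k i (x k))^* * Q k i (y k))); last first.
    by move=> k _; rewrite dec_eq.
  by rewrite bigA_distr_bigA.
suff -> : trace_mul rho (tensor A) = \sum_(f : {ffun 'I_n -> 'I_d})
    (\prod_k c k (f k)) * \sum_x \sum_y (v f x)^* * rho x y * v f y.
  apply: sumr_ge0 => f _; apply: mulr_ge0.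
    by apply: prodr_ge0 => k _; apply: dec_ge0.
  by case: hr => _ /(_ (v f)).
rewrite /trace_mul.
under eq_bigr do under eq_bigr do rewrite Et big_distrr.
under eq_bigr do rewrite exchange_big.
rewrite exchange_big; apply: eq_bigr => f _.
rewrite big_distrr; apply: eq_bigr => x _.
rewrite big_distrr; apply: eq_bigr => y _.
rewrite /v rmorph_prod.
rewrite /=; have -> : \prod_i (Q i (f i) (x i))^*^* = \prod_i Q i (f i) (x i) by apply: eq_bigr => i _; rewrite conjCK.
rewrite !big_split /=.
ring.
Qed.
Section Main.
Variable C : numClosedFieldType.
Variables d n : nat.
Variable rho : op C (tens_idx d n).
Local Notation I := (@idop C ('I_d : finType)).

Lemma tr_ext (A B : 'I_n -> op C 'I_d) : (forall k, A k = B k) ->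
  trace_mul rho (tensor A) = trace_mul rho (tensor B).
Proof.
move=> E; apply: eq_bigr => x _; apply: eq_bigr => y _; congr (_ * _).
by apply: eq_bigr => k _; rewrite E.
Qed.

Definition G (j : 'I_n) (R : 'I_n -> op C 'I_d) (X : op C 'I_d) :=
  trace_mul rho (tensor (fun k => if k == j then X else R k)).

Lemma G_sub j R X Y : G j R (subop X Y) = G j R X - G j R Y.
Proof.
rewrite /G /trace_mul -sumrB; apply: eq_bigr => x _.
rewrite -sumrB; apply: eq_bigr => y _.
have E : forall Z, tensor (fun k => if k == j then Z else R k) y x
    = Z (y j) (x j) * \prod_(k | k != j) R k (y k) (x k).
  move=> Z; rewrite /tensor (bigD1 j) //= eqxx; congr (_ * _).
  by apply: eq_bigr => k /negbTE ->.
rewrite !E /subop; ring.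
Qed.

Definition Fm (M : 'I_n -> op C 'I_d) (U : pred {ffun 'I_n -> bool}) :=
  \sum_(b | U b) trace_mul rho (tensor (fun k => if b k then M k else subop I (M k))).

Lemma step (U : pred {ffun 'I_n -> bool}) (M M' : 'I_n -> op C 'I_d) (j : 'I_n) :
  psd rho ->
  (forall b b' : {ffun 'I_n -> bool}, (forall k, b k ==> b' k) -> U b -> U b') ->
  (forall k, k != j -> M' k = M k) ->
  psd (subop (M' j) (M j)) ->
  (forall k, psd (M k)) -> (forall k, psd (subop I (M k))) ->
  Fm M U <= Fm M' U.
Proof.
move=> hr Umono EM hD hM hIM.
pose t (b : {ffun 'I_n -> bool}) : {ffun 'I_n -> bool} :=
  [ffun k => if k == j then ~~ b k else b k].
have tK : involutive t.
  by move=> b; apply/ffunP => k; rewrite !ffunE; case: eqP => // _; rewrite negbK.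
have split : forall N : 'I_n -> op C 'I_d, Fm N U = \sum_(b : {ffun 'I_n -> bool} | b j)
   ((U b)%:R * trace_mul rho (tensor (fun k => if b k then N k else subop I (N k)))
  + (U (t b))%:R * trace_mul rho (tensor (fun k => if t b k then N k else subop I (N k)))).
  move=> N; rewrite /Fm big_mkcond (bigID (fun b : {ffun 'I_n -> bool} => b j)) /=.
  rewrite [X in _ + X](reindex_inj (can_inj tK)) /=.
  have tj : forall b, (~~ t b j) = b j by move=> b; rewrite ffunE eqxx negbK.
  rewrite [X in _ + X](eq_bigl _ _ tj) -big_split /=.
  apply: eq_bigr => b _; by case: (U b); case: (U (t b)); rewrite ?mul1r ?mul0r ?add0r ?addr0.
rewrite !split; apply: ler_sum => b bj.
pose R k := if b k then M k else subop I (M k).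
have h1 : forall N : 'I_n -> op C 'I_d, (forall k, k != j -> N k = M k) ->
   trace_mul rho (tensor (fun k => if b k then N k else subop I (N k))) = G j R (N j).
  move=> N EN; apply: tr_ext => k; case: (eqVneq k j) => [->|kj]; first by rewrite bj.
  by rewrite /R EN.
have h2 : forall N : 'I_n -> op C 'I_d, (forall k, k != j -> N k = M k) ->
   trace_mul rho (tensor (fun k => if t b k then N k else subop I (N k)))
     = G j R I - G j R (N j).
  move=> N EN; rewrite -G_sub; apply: tr_ext => k; rewrite ffunE.
  case: (eqVneq k j) => [->|kj]; first by rewrite bj.
  by rewrite /R EN.
rewrite !h1 ?h2 //.
have Ut : (U (t b))%:R <= (U b)%:R :> C.
  case Utb: (U (t b)) => //=; rewrite (Umono (t b) b) //.
  by move=> k; rewrite ffunE; case: eqP => [->|]; rewrite ?bj ?implybT ?implybb.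
have g0 : 0 <= G j R (subop (M' j) (M j)).
  apply: tr_tensor_ge0 => // k; case: eqP => // _.
  by rewrite /R; case: (b k).
rewrite G_sub in g0.
rewrite -subr_ge0.
have -> : (U b)%:R * G j R (M' j) + (U (t b))%:R * (G j R I - G j R (M' j)) -
  ((U b)%:R * G j R (M j) + (U (t b))%:R * (G j R I - G j R (M j))) =
  ((U b)%:R - (U (t b))%:R) * (G j R (M' j) - G j R (M j)) by ring.
by apply: mulr_ge0 => //; rewrite subr_ge0.
Qed.
End Main.
Theorem lemma8 (C : numClosedFieldType) (d n : nat)
  (rho : op C (tens_idx d n)) (P P' : op C 'I_d) (e : C) :
  is_state rho ->
  two_outcome_povm P -> two_outcome_povm P' ->
  loewner_le P P' ->
  e \is Num.real ->
  prob_frac_ge rho P e <= prob_frac_ge rho P' e.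
Proof.
move=> [hr _] [hP hIP] [hP' hIP'] hle _.
pose U := fun b : {ffun 'I_n -> bool} => e <= (num_P b)%:R / n%:R.
have Umono : forall b b' : {ffun 'I_n -> bool}, (forall k, b k ==> b' k) -> U b -> U b'.
  move=> b b' H; rewrite /U => /le_trans; apply.
  apply: ler_wpM2r; first by rewrite invr_ge0 ler0n.
  rewrite ler_nat /num_P; apply: subset_leq_card; apply/subsetP => k.
  by rewrite !inE => /(implyP (H k)).
pose M m := fun k : 'I_n => if (k < m)%N then P' else P.
have E0 : prob_frac_ge rho P e = Fm rho (M 0%N) U.
  apply: eq_bigr => b _; apply: tr_ext => k; by rewrite /M ltn0.
have En : prob_frac_ge rho P' e = Fm rho (M n) U.
  apply: eq_bigr => b _; apply: tr_ext => k; by rewrite /M ltn_ord.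
rewrite E0 En.
have : forall m, (m <= n)%N -> Fm rho (M 0%N) U <= Fm rho (M m) U.
  elim=> [|m IH] Hm //.
  apply: (le_trans (IH (ltnW Hm))).
  apply: (@step _ _ _ _ U _ _ (Ordinal Hm)) => //.
  - move=> k kj; rewrite /M ltnS leq_eqVlt.
    have -> : (nat_of_ord k == m) = false.
      by apply/negbTE; apply: contra kj => /eqP kE; apply/eqP; apply: val_inj.
    by [].
  - by rewrite /M /= ltnSn ltnn.
  - by move=> k; rewrite /M; case: ifP.
  - by move=> k; rewrite /M; case: ifP.
by apply.
Qed.
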